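(* Let $\mathcal I$ and $\mathcal J$ be ideals on $\omega$ and let $X$ be a normal space. (1) If $\mathcal I\neq\mathcal J$, then $\mathrm{non}(\mathcal I\text{-p},\mathcal J\text{-u})=\mathrm{non}(\mathcal I\text{-qn},\mathcal J\text{-u})=\mathrm{non}(\mathcal I\text{-}\sigma\text{-u},\mathcal J\text{-u})=1$. (2) $X\in(\mathcal I\text{-p},\mathcal I\text{-u})\iff X\in(\mathcal I\text{-qn},\mathcal I\text{-u})\iff X\in(\mathcal I\text{-}\sigma\text{-u},\mathcal I\text{-u})\iff |X|<\omega$. (3) $\mathrm{non}(\mathcal I\text{-p},\mathcal I\text{-u})=\mathrm{non}(\mathcal I\text{-qn},\mathcal I\text{-u})=\mathrm{non}(\mathcal I\text{-}\sigma\text{-u},\mathcal I\text{-u})=\omega$. (4) There is no infinite normal space in any of the classes $(\mathcal I\text{-p},\mathcal I\text{-u})$, $(\mathcal I\text{-qn},\mathcal I\text{-u})$, $(\mathcal I\text{-}\sigma\text{-u},\mathcal I\text{-u})$.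
   Context: An ideal on $\omega$ is a family $\mathcal I\subseteq\mathcal P(\omega)$ closed under finite unions and subsets, containing all finite sets, with $\omega\notin\mathcal I$. For an ideal $\mathcal I$ on $\omega$, a real sequence $(a_n)$ is $\mathcal I$-convergent to $0$ if $\{n:|a_n|\ge\varepsilon\}\in\mathcal I$ for every $\varepsilon>0$. For a sequence $(f_n)$ of real-valued functions on a set $X$: $(f_n)$ is $\mathcal I$-pointwise convergent to $0$ (written $\mathcal I$-p) if $(f_n(x))$ is $\mathcal I$-convergent to $0$ for every $x\in X$; $\mathcal I$-uniformly convergent to $0$ ($\mathcal I$-u) if $\{n:\exists x\in X\,(|f_n(x)|\ge\varepsilon)\}\in\mathcal I$ for every $\varepsilon>0$; $\mathcal I$-$\sigma$-uniformly convergent to $0$ ($\mathcal I$-$\sigma$-u) if there are sets $X_k$ ($k\in\omega$) with $\bigcup_k X_k=X$ such that $(f_n\restriction X_k)$ is $\mathcal I$-uniformly convergent to $0$ for every $k$; $\mathcal I$-quasi-normally convergent to $0$ ($\mathcal I$-qn) if there is a sequence $(\varepsilon_n)$ of positive reals $\mathcal I$-convergent to $0$ such that $\{n:|f_n(x)|\ge\varepsilon_n\}\in\mathcal I$ for every $x\in X$. $\mathcal C(X)$ denotes the set of continuous real-valued functions on a space $X$. A normal space is a Hausdorff space in which any two disjoint closed sets have disjoint open neighbourhoods. For two convergence notions $\alpha,\beta$ from the list above (possibly with different ideals), $(\alpha,\beta)$ is the class of all normal spaces $X$ such that for every sequence $(f_n)$ in $\mathcal C(X)$, $(f_n)$ converges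 to $0$ in sense $\alpha$ iff it converges to $0$ in sense $\beta$; $\mathrm{non}(\alpha,\beta)$ is the least cardinality of a normal space not in $(\alpha,\beta)$ (and $\infty$ if there is none). *)

(* Defs.v *)
From HB Require Import structures.
From mathcomp Require Import all_boot all_order all_algebra.
From mathcomp Require Import all_classical all_reals all_analysis.
Set Implicit Arguments. Unset Strict Implicit. Unset Printing Implicit Defensive.
Import Order.TTheory GRing.Theory Num.Theory.
Import numFieldNormedType.Exports.
Local Open Scope classical_set_scope.
Local Open Scope ring_scope.

Definition is_ideal (I : set (set nat)) : Prop :=
  (forall A B, I A -> I B -> I (A `|` B)) /\
  (forall A B, B `<=` A -> I A -> I B) /\
  (forall A, finite_set A -> I A) /\
  ~ I [set: nat].

Section conv.
Variable R : realType.

Definition Iconv (I : set (set nat)) (a : nat -> R) : Prop :=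
  forall eps : R, 0 < eps -> I [set n | eps <= `|a n|].

Definition conv_notion := forall T : topologicalType, (nat -> T -> R) -> Prop.

Definition Ip (I : set (set nat)) : conv_notion :=
  fun T f => forall x : T, Iconv I (fun n => f n x).

Definition Iu_on (I : set (set nat)) (T : Type) (A : set T) (f : nat -> T -> R) :=
  forall eps : R, 0 < eps -> I [set n | exists2 x, A x & eps <= `|f n x|].

Definition Iu (I : set (set nat)) : conv_notion :=
  fun T f => Iu_on I [set: T] f.

Definition Isu (I : set (set nat)) : conv_notion :=
  fun T f => exists Xk : nat -> set T,
    \bigcup_k Xk k = [set: T] /\ forall k, Iu_on I (Xk k) f.

Definition Iqn (I : set (set nat)) : conv_notion :=
  fun T f => exists e : nat -> R,
    (forall n, 0 < e n) /\ Iconv I e /\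
    forall x : T, I [set n | e n <= `|f n x|].

Definition in_class (alpha beta : conv_notion) (T : topologicalType) : Prop :=
  forall f : nat -> T -> R, (forall n, continuous (f n)) ->
    (alpha T f <-> beta T f).

End conv.

Definition normal_sp (T : topologicalType) : Prop :=
  hausdorff_space T /\
  forall A B : set T, closed A -> closed B -> A `&` B = set0 ->
    exists U V : set T, [/\ open U, open V, A `<=` U, B `<=` V & U `&` V = set0].

(* non(alpha,beta) equals the cardinality of the type K: some normal space not
   in the class has cardinality |K|, and every normal space not in the class has
   cardinality at least |K| *)
Definition non_is (R : realType) (alpha beta : conv_notion R) (K : Type) : Prop :=
  (exists T : topologicalType, normal_sp T /\ ~ in_class alpha beta T /\
     ([set: T] #= [set: K])%card) /\
  (forall T : topologicalType, normal_sp T -> ~ in_class alpha beta T ->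
     ([set: K] #<= [set: T])%card).

(* Main.v *)
Require Import Defs.
From HB Require Import structures.
From mathcomp Require Import all_boot all_order all_algebra.
From mathcomp Require Import all_classical all_reals all_analysis.
Set Implicit Arguments. Unset Strict Implicit. Unset Printing Implicit Defensive.
Import Order.TTheory GRing.Theory Num.Theory.
Import numFieldNormedType.Exports.
Local Open Scope classical_set_scope.
Local Open Scope ring_scope.
Section gen.
Variable R : realType.
Variable I : set (set nat).
Hypothesis hI : is_ideal I.

Lemma idU A B : I A -> I B -> I (A `|` B).
Proof. by case: hI => h _; apply: h. Qed.
Lemma idS A B : B `<=` A -> I A -> I B.
Proof. by case: hI => _ [h _]; apply: h. Qed.
Lemma idF A : finite_set A -> I A.
Proof. by case: hI => _ [_ [h _]]; apply: h. Qed.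
Lemma idT : ~ I setT.
Proof. by case: hI => _ [_ [_ h]]. Qed.

Lemma iconv_inv : Iconv I (fun n : nat => ((n.+1)%:R : R)^-1).
Proof.
move=> eps e0; apply: idF; apply: (sub_finite_set _ (finite_II (Num.bound (eps^-1)))).
move=> n /= hn; rewrite /= -(ltr_nat R).
have hp : 0 <= eps^-1 by rewrite invr_ge0 ltW.
have h1 := archi_boundP hp.
apply: le_lt_trans h1.
rewrite ger0_norm ?invr_ge0 // in hn.
have hn' : (n.+1)%:R <= eps^-1.
  by rewrite -(invrK ((n.+1)%:R : R)) lef_pV2 ?posrE ?invr_gt0 ?ltr0n.
apply: le_trans hn'; rewrite ler_nat; exact: leqnSn.
Qed.
End gen.
Section gen2.
Variable R : realType.
Variable I : set (set nat).
Hypothesis hI : is_ideal I.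
Variable T : topologicalType.
Implicit Type f : nat -> T -> R.

Lemma iu_ip f : Iu I f -> Ip I f.
Proof.
move=> h x eps e0; apply: (idS hI _ (h eps e0)) => n /= hn; by exists x.
Qed.

Lemma iu_isu f : Iu I f -> Isu I f.
Proof.
move=> h; exists (fun _ => setT); split; last by move=> k.
by apply/seteqP; split => // x _; exists 0%N.
Qed.

Lemma isu_ip f : Isu I f -> Ip I f.
Proof.
move=> [Xk [hc hk]] x eps e0.
have : (\bigcup_k Xk k) x by rewrite hc.
move=> [k _ hx]; apply: (idS hI _ (hk k eps e0)) => n /= hn; by exists x.
Qed.

Lemma iqn_ip f : Iqn I f -> Ip I f.
Proof.
move=> [e [ep [ec he]]] x eps e0.
apply: (idS hI _ (idU hI (he x) (ec eps e0))) => n /= hn.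
case: (leP (e n) `|f n x|) => h; first by left.
right => /=; rewrite ger0_norm; [exact: le_trans hn (ltW h) | exact: ltW (ep n)].
Qed.

Lemma seq_union (P : nat -> T -> Prop) (s : seq T) :
  (forall x, I [set n | P n x]) -> I [set n | exists2 x, x \in s & P n x].
Proof.
move=> h; elim: s => [|a s IH].
  by apply: (idF hI); apply: (sub_finite_set _ (finite_set0 nat)) => n /= [x].
apply: (idS hI _ (idU hI (h a) IH)) => n /= [x]; rewrite inE => /orP[/eqP -> |xs] Pn.
  by left.
by right; exists x.
Qed.

Lemma fin_enum : finite_set [set: T] -> exists s : seq T, forall x, x \in s.
Proof.
move=> /finite_fsetP [F hF]; exists (finmap.enum_fset F) => x.
have : [set: T] x by [].
by rewrite hF /=.
Qed.

Lemma fin_ip_iu f : finite_set [set: T] -> Ip I f -> Iu I f.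
Proof.
move=> /fin_enum [s hs] h eps e0.
apply: (idS hI _ (seq_union (P := fun n x => eps <= `|f n x|) s (fun x => h x eps e0))).
move=> n /= [x _ hx]; by exists x.
Qed.

Definition bmax (g : T -> R) (s : seq T) := \big[Num.max/0]_(x <- s) g x.

Lemma bmax_ge0 g s : 0 <= bmax g s.
Proof.
rewrite /bmax; elim: s => [|a s IH]; first by rewrite big_nil.
by rewrite big_cons le_max IH orbT.
Qed.

Lemma bmax_ub g s x : x \in s -> g x <= bmax g s.
Proof.
rewrite /bmax; elim: s => [|a s IH] //; rewrite inE big_cons le_max.
by case/orP => [/eqP ->|/IH ->]; rewrite ?lexx ?orbT.
Qed.

Lemma bmax_ex g s eps : 0 < eps -> eps <= bmax g s -> exists2 x, x \in s & eps <= g x.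
Proof.
move=> e0; rewrite /bmax; elim: s => [|a s IH].
  by rewrite big_nil => h; move: (lt_le_trans e0 h); rewrite ltxx.
rewrite big_cons le_max => /orP[h|/IH [x xs hx]].
  by exists a; rewrite ?inE ?eqxx.
by exists x; rewrite // inE xs orbT.
Qed.

Lemma fin_ip_iqn f : finite_set [set: T] -> Ip I f -> Iqn I f.
Proof.
move=> fT h; have [s hs] := fin_enum fT.
have hu := fin_ip_iu fT h.
pose e n := bmax (fun x => `|f n x|) s + ((n.+1)%:R : R)^-1.
have epos : forall n, 0 < e n.
  by move=> n; rewrite /e ltr_wpDl ?bmax_ge0 // invr_gt0 ltr0n.
exists e; split; [|split].
- exact: epos.
- move=> eps e0; have e2 : 0 < eps / 2 by rewrite divr_gt0.
  have h1 := hu _ e2; have h2 := @iconv_inv R I hI _ e2.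
  apply: (idS hI _ (idU hI h1 h2)) => n /= hn.
  rewrite (ger0_norm (ltW (epos n))) /e in hn.
  case: (leP (eps / 2) (bmax (fun x => `|f n x|) s)) => hb.
    by left; have [x _ hx] := bmax_ex e2 hb; exists x.
  right; rewrite ger0_norm ?invr_ge0 ?ler0n //.
  rewrite leNgt; apply/negP => hlt.
  have := ltrD hb hlt; rewrite -splitr => hs'.
  by move: (le_lt_trans hn hs'); rewrite ltxx.
- move=> x; apply: (idF hI); apply: (sub_finite_set _ (finite_set0 nat)) => n /=.
  rewrite /e => hn; have := bmax_ub (fun x => `|f n x|) (hs x).
  move=> /= hb; have : `|f n x| < bmax (fun x => `|f n x|) s + ((n.+1)%:R : R)^-1.
    by apply: le_lt_trans hb _; rewrite ltrDl invr_gt0 ltr0n.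
  by rewrite ltNge hn.
Qed.
End gen2.
Section gen3.
Variable R : realType.
Variable I : set (set nat).
Hypothesis hI : is_ideal I.

Lemma fin_class (T : topologicalType) : finite_set [set: T] ->
  in_class (@Ip R I) (@Iu R I) T /\ in_class (@Iqn R I) (@Iu R I) T /\
  in_class (@Isu R I) (@Iu R I) T.
Proof.
move=> fT; split; [|split] => f _; split.
- exact: fin_ip_iu.
- exact: iu_ip.
- by move=> /(iqn_ip hI); apply: fin_ip_iu.
- by move=> /(iu_ip hI); apply: fin_ip_iqn.
- by move=> /(isu_ip hI); apply: fin_ip_iu.
- exact: iu_isu.
Qed.

Lemma cex_class (T : topologicalType) (f : nat -> T -> R) :
  (forall n, continuous (f n)) ->
  (forall x n m, f n x != 0 -> f m x != 0 -> n = m) ->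
  (forall n, exists x, 1 <= `|f n x|) ->
  ~ in_class (@Ip R I) (@Iu R I) T /\ ~ in_class (@Iqn R I) (@Iu R I) T /\
  ~ in_class (@Isu R I) (@Iu R I) T.
Proof.
move=> fc h1 h2.
have nu : ~ Iu I f.
  move=> /(_ 1 ltr01) hu; apply: (idT hI); apply: (idS hI _ hu) => n _ /=.
  by have [x hx] := h2 n; exists x.
have sfin : forall x (P : nat -> Prop), (forall n, P n -> f n x != 0) -> I [set n | P n].
  move=> x P hP; apply: (idF hI).
  case: (pselect (exists n, f n x != 0)) => [[n0 hn0]|hno].
    apply: (sub_finite_set _ (finite_set1 n0)) => n /= /hP hn.
    exact: h1 hn hn0.
  apply: (sub_finite_set _ (finite_set0 nat)) => n /= /hP hn.
  by apply: hno; exists n.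
have hp : Ip I f.
  move=> x eps e0; apply: (sfin x) => n hn; apply/eqP => h0.
  by move: (lt_le_trans e0 hn); rewrite h0 normr0 ltxx.
have hq : Iqn I f.
  exists (fun n : nat => ((n.+1)%:R : R)^-1); split; [|split].
  - by move=> n; rewrite invr_gt0 ltr0n.
  - exact: iconv_inv.
  - move=> x; apply: (sfin x) => n hn; apply/eqP => h0.
    by move: hn; rewrite h0 normr0 leNgt invr_gt0 ltr0n.
have hs : Isu I f.
  exists (fun k => [set x | forall n, (k <= n)%N -> f n x = 0]); split.
    apply/seteqP; split => // x _.
    case: (pselect (exists n, f n x != 0)) => [[n0 hn0]|hno].
      exists n0.+1 => // n hn; apply/eqP; apply/negP => /negP hx.
      by move: hn; rewrite (h1 _ _ _ hx hn0) ltnn.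
    exists 0%N => // n _; apply/eqP; apply/negP => /negP hx; apply: hno; by exists n.
  move=> k eps e0; apply: (idF hI); apply: (sub_finite_set _ (finite_II k)).
  move=> n /= [x hx hn]; rewrite ltnNge; apply/negP => kn.
  by move: (lt_le_trans e0 hn); rewrite hx // normr0 ltxx.
split; [|split] => /(_ f fc) [H _]; apply: nu; exact: H.
Qed.
End gen3.
Section inf.
Variable T : topologicalType.
Hypothesis hT : hausdorff_space T.

Lemma clos_disj (U V : set T) : open U -> U `&` V = set0 -> U `&` closure V = set0.
Proof.
move=> oU UV; apply/seteqP; split => // z [Uz cz].
have := cz U (open_nbhs_nbhs (conj oU Uz)); move=> [w [Vw Uw]].
by have : (U `&` V) w by []; rewrite UV.
Qed.

Lemma step (W : set T) : open W -> infinite_set W ->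
  exists O, [/\ open O, O `<=` W, O !=set0 & infinite_set (W `\` closure O)].
Proof.
move=> oW iW.
have [x Wx] := infinite_setN0 iW.
have iW' : infinite_set (W `\` [set x]) by apply: infinite_setD => //; exact: finite_set1.
have [y [Wy yx]] := infinite_setN0 iW'.
have xy : x != y by apply/eqP => exy; apply: yx; rewrite exy.
move: hT; rewrite open_hausdorff => /(_ x y xy) [[U V] /=].
rewrite !inE => -[Ux Vy] [oU oV UV0].
have UV := UV0.
have acc := hausdorff_accessible hT.
case: (pselect (finite_set (W `\` closure (U `&` W)))) => hf; last first.
  by exists (U `&` W); split => //; [exact: openI| exists x].
exists (V `&` W); split => //; [exact: openI| by exists y|].
have sub : U `&` W `<=` W `\` closure (V `&` W).
  move=> z [Uz Wz]; split => // cz.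
  have : (U `&` W) `&` closure (V `&` W) = set0.
    apply: clos_disj; first exact: openI.
    apply/seteqP; split => // w [[Uw _] [Vw _]].
    by have : (U `&` V) w by []; rewrite UV.
  by move/seteqP => [+ _] => /(_ z) /=; apply.
apply: (sub_infinite_set sub) => fUW.
have cl : closed (U `&` W) by move: acc => /accessible_finite_set_closed; apply.
move: cl => /closure_id cl; rewrite -cl in hf.
have fu : finite_set ((W `\` (U `&` W)) `|` (U `&` W)) by rewrite finite_setU.
apply: iW; apply: (sub_finite_set _ fu) => z Wz.
by case: (pselect ((U `&` W) z)) => h; [right|left].
Qed.
End inf.
Section inf2.
Variable T : topologicalType.
Hypothesis hT : hausdorff_space T.

Lemma disj_seq : infinite_set [set: T] -> exists O : nat -> set T,
  [/\ forall n, open (O n), forall n, O n !=set0 &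
      forall n m z, O n z -> O m z -> n = m].
Proof.
move=> iT.
have : forall W : set T, exists O : set T, open W /\ infinite_set W ->
   [/\ open O, O `<=` W, O !=set0 & infinite_set (W `\` closure O)].
  move=> W; case: (pselect (open W /\ infinite_set W)) => [[oW iW]|h].
    by have [Q hQ] := step hT oW iW; exists Q.
  by exists set0.
move=> /choice [g hg].
pose Ws := fix Ws n := match n with 0%N => [set: T] | n'.+1 => Ws n' `\` closure (g (Ws n')) end.
have hinv : forall n, open (Ws n) /\ infinite_set (Ws n).
  elim => [|n [oW iW]] /=; first by split => //; exact: openT.
  have [ oO sO nO iO] := hg _ (conj oW iW); split => //.
  rewrite setDE; apply: openI => //; apply: closed_openC; exact: closed_closure.
have dec : forall n k, Ws (n + k)%N `<=` Ws n.
  move=> n; elim => [|k IH]; first by rewrite addn0.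
  by rewrite addnS /= => z [/IH].
exists (fun n => g (Ws n)); split.
- by move=> n; have [] := hg _ (hinv n).
- by move=> n; have [] := hg _ (hinv n).
- move=> n m z.
  wlog nm : n m / (n <= m)%N.
    move=> H; case/orP: (leq_total n m) => h a b; first exact: H.
    by apply/esym; apply: H.
  move=> On Om; move: nm; rewrite leq_eqVlt => /orP[/eqP //|nm].
  exfalso; have [_ sO _ _] := hg _ (hinv m).
  have := sO _ Om; rewrite -(subnKC nm) => /dec /=.
  move=> [_]; apply; exact: subset_closure.
Qed.
End inf2.
Lemma inf_notin (R : realType) (I : set (set nat)) (hI : is_ideal I)
  (T : topologicalType) : normal_sp T -> infinite_set [set: T] ->
  ~ in_class (@Ip R I) (@Iu R I) T /\ ~ in_class (@Iqn R I) (@Iu R I) T /\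
  ~ in_class (@Isu R I) (@Iu R I) T.
Proof.
move=> [hT hN] iT.
have ns : normal_space T := (@normal_openP R T).2 hN.
have sep := (@normal_separatorP R T).1 ns.
have [ O [oO nO dO]] := disj_seq hT iT.
have [x hx] := choice (fun n => nO n).
have : forall n, exists g : T -> R,
    [/\ continuous g, forall z, ~ O n z -> g z = 0 & g (x n) = 1].
  move=> n.
  have c1 : closed (~` O n) by exact: open_closedC.
  have c2 : closed [set x n] by apply: accessible_closed_set1; apply: hausdorff_accessible.
  have d : ~` O n `&` [set x n] = set0.
    apply/seteqP; split => // z [nz zx]; apply: nz; rewrite zx; exact: hx.
  have := sep _ _ c1 c2 d => /(@uniform_separatorP T R) [g [gc _ g0 g1]].
  exists g; split => //.
    by move=> z nz; apply: g0; exists z.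
  by apply: g1; exists (x n).
move=> /choice [f hf].
apply: (cex_class hI (f := f)).
- by move=> n; have [] := hf n.
- move=> z n m hn hm; apply: (dO n m z).
    apply: contra_notP (negP hn) => nz; apply/eqP; have [_ h _] := hf n; exact: h.
  apply: contra_notP (negP hm) => nz; apply/eqP; have [_ h _] := hf m; exact: h.
- move=> n; exists (x n); have [_ _ ->] := hf n; by rewrite normr1.
Qed.
Lemma disc_cont (R : realType) (X : discreteTopologicalType) (g : X -> R) : continuous g.
Proof.
move=> x U /= hU; rewrite nbhs_principalE; apply/principal_filterP.
exact: nbhs_singleton hU.
Qed.

Lemma disc_normal (X : discreteTopologicalType) : normal_sp X.
Proof.
split; first exact: discrete_hausdorff.
move=> A B _ _ AB; exists A, B; split => //; exact: discrete_open.
Qed.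

Definition U1 := discrete_topology unit.

Lemma unitT : [set: U1] = [set tt].
Proof. by apply/seteqP; split => // -[]. Qed.

Lemma empty_in (R : realType) (I J : set (set nat)) (hI : is_ideal I) (hJ : is_ideal J)
  (T : topologicalType) : (forall x : T, False) ->
  in_class (@Ip R I) (@Iu R J) T /\ in_class (@Iqn R I) (@Iu R J) T /\
  in_class (@Isu R I) (@Iu R J) T.
Proof.
move=> e.
have hu : forall f : nat -> T -> R, Iu J f.
  move=> f eps e0; apply: (idF hJ); apply: (sub_finite_set _ (finite_set0 nat)).
  by move=> n /= [x].
have hp : forall f : nat -> T -> R, Ip I f by move=> f x; case: (e x).
have hq : forall f : nat -> T -> R, Iqn I f.
  move=> f; exists (fun n : nat => ((n.+1)%:R : R)^-1); split; [|split].
  - by move=> n; rewrite invr_gt0 ltr0n.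
  - exact: iconv_inv.
  - by move=> x; case: (e x).
have hs : forall f : nat -> T -> R, Isu I f.
  move=> f; exists (fun _ => set0); split.
    by apply/seteqP; split => // x; case: (e x).
  move=> k eps e0; apply: (idF hI); apply: (sub_finite_set _ (finite_set0 nat)).
  by move=> n /= [x].
by split; [|split] => f _; split.
Qed.

Lemma nonempty_le (T : Type) (x0 : T) : ([set: unit] #<= [set: T])%card.
Proof.
have -> : [set: unit] = [set tt] by apply/seteqP; split => // -[].
rewrite (card_le_eql (eq_card1 tt x0)); exact: subset_card_le.
Qed.

Unset Implicit Arguments.
Theorem corollary3p5 (R : realType) (I J : set (set nat))
  (hI : is_ideal I) (hJ : is_ideal J) (X : topologicalType) (hX : normal_sp X) :
  (* (1) *)
  (I <> J ->
     non_is (@Ip R I) (@Iu R J) unit /\ non_is (@Iqn R I) (@Iu R J) unit /\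
     non_is (@Isu R I) (@Iu R J) unit) /\
  (* (2) *)
  ((in_class (@Ip R I) (@Iu R I) X <-> in_class (@Iqn R I) (@Iu R I) X) /\
   (in_class (@Iqn R I) (@Iu R I) X <-> in_class (@Isu R I) (@Iu R I) X) /\
   (in_class (@Isu R I) (@Iu R I) X <-> finite_set [set: X])) /\
  (* (3) *)
  (non_is (@Ip R I) (@Iu R I) nat /\ non_is (@Iqn R I) (@Iu R I) nat /\
   non_is (@Isu R I) (@Iu R I) nat) /\
  (* (4) *)
  (forall Y : topologicalType, normal_sp Y -> infinite_set [set: Y] ->
     ~ in_class (@Ip R I) (@Iu R I) Y /\ ~ in_class (@Iqn R I) (@Iu R I) Y /\
     ~ in_class (@Isu R I) (@Iu R I) Y).
Proof.
have fin_iff : forall Y : topologicalType, normal_sp Y ->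
   [/\ in_class (@Ip R I) (@Iu R I) Y <-> finite_set [set: Y],
       in_class (@Iqn R I) (@Iu R I) Y <-> finite_set [set: Y] &
       in_class (@Isu R I) (@Iu R I) Y <-> finite_set [set: Y]].
  move=> Y hY.
  case: (pselect (finite_set [set: Y])) => fY.
    by have [a [b c]] := fin_class R hI fY; split; split => // _.
  have [a [b c]] := @inf_notin R I hI _ hY fY.
  by split; split => h; exfalso; first [exact: a h | exact: b h | exact: c h | exact: fY h].
have le_nat : forall Y : topologicalType, normal_sp Y ->
   (~ in_class (@Ip R I) (@Iu R I) Y -> ([set: nat] #<= [set: Y])%card) /\
   (~ in_class (@Iqn R I) (@Iu R I) Y -> ([set: nat] #<= [set: Y])%card) /\
   (~ in_class (@Isu R I) (@Iu R I) Y -> ([set: nat] #<= [set: Y])%card).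
  move=> Y hY; have [a b c] := fin_iff Y hY.
  by split; [|split] => h; apply/infiniteP => fY; apply: h;
    [apply/a|apply/b|apply/c].
split; last split; last split.
- move=> IJ.
  have [A hA] : exists A, ~ (I A <-> J A).
    apply: contra_notP IJ => hn; apply: funext => A; apply: propext.
    by apply: contra_notP hn => h; exists A.
  have U1n := @disc_normal U1.
  have fU1 : finite_set [set: U1] by rewrite unitT; exact: finite_set1.
  pose f : nat -> U1 -> R := fun n _ => if pselect (A n) then 1 else 0.
  have fc : forall n, continuous (f n) by move=> n; exact: disc_cont.
  have fA : forall n x, A n -> f n x = 1.
    by move=> n x an; rewrite /f; case: pselect.
  have fnA : forall n x, ~ A n -> f n x = 0.
    by move=> n x an; rewrite /f; case: pselect.
  have notin : ~ in_class (@Ip R I) (@Iu R J) U1 /\ ~ in_class (@Iqn R I) (@Iu R J) U1 /\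
      ~ in_class (@Isu R I) (@Iu R J) U1.
    case: (pselect (I A)) => IA.
      have JA : ~ J A by move=> JA; apply: hA.
      have nu : ~ Iu J f.
        move=> /(_ 1 ltr01) hu; apply: JA; apply: (idS hJ _ hu) => n /= an.
        by exists tt => //; rewrite fA // normr1.
      have hp : Ip I f.
        move=> x eps e0; apply: (idS hI _ IA) => n /= hn.
        case: (pselect (A n)) => // an; move: (lt_le_trans e0 hn).
        by rewrite fnA // normr0 ltxx.
      have hq := fin_ip_iqn hI fU1 hp.
      have hs := iu_isu (fin_ip_iu hI fU1 hp).
      by split; [|split] => /(_ f fc) [H _]; apply: nu; apply: H.
    have JA : J A by apply: contra_notP hA => JA; split.
    have hu : Iu J f.
      move=> eps e0; apply: (idS hJ _ JA) => n /= [x _ hn].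
      case: (pselect (A n)) => // an; move: (lt_le_trans e0 hn).
      by rewrite fnA // normr0 ltxx.
    have np : ~ Ip I f.
      move=> /(_ tt 1 ltr01) hp; apply: IA; apply: (idS hI _ hp) => n /= an.
      by rewrite fA // normr1.
    by split; [|split] => /(_ f fc) [_ H]; apply: np;
      [|apply: (iqn_ip hI)|apply: (isu_ip hI)]; apply: H.
  have second : forall Y : topologicalType, (forall x : Y, False) \/ ([set: unit] #<= [set: Y])%card.
    move=> Y; case: (pselect (exists x : Y, True)) => [[x _]|h]; [right|left].
      exact: nonempty_le.
    by move=> x; apply: h; exists x.
  have [e1 [e2 e3]] := notin.
  split; [|split]; (split; [exists U1; split => //; split => //; exact: card_eqxx|]);
    move=> Y _ hY; case: (second Y) => // he; exfalso; apply: hY;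
    have [a [b c]] := empty_in R hI hJ he; assumption.
- have [a b c] := fin_iff X hX.
  split; [|split] => //.
    by rewrite a b.
  by rewrite b c.
- have nn := @disc_normal nat.
  have [a [b c]] := @inf_notin R I hI _ nn infinite_nat.
  have [d [e g]] := le_nat nat nn.
  split; [|split]; (split; [exists nat; split => //; split => //; exact: card_eqxx|]);
  move=> Y hY; have [d' [e' g']] := le_nat Y hY; assumption.
- move=> Y hY iY; exact: inf_notin.
Qed.
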